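(* Let $G$ be a finite group which is not simple (and nontrivial). Then $|L(G)|$ is disconnected if and only if $G\cong A\rtimes \mathbb{Z}/p$ where $A\neq 1$ is an elementary abelian group, $p$ is prime, and $A$ has no proper nontrivial subgroup invariant under the action of $\mathbb{Z}/p$.
   Context: $L(G)$ is the poset of proper nontrivial subgroups of $G$ ordered by inclusion, and $|L(G)|$ the geometric realization of its order complex. Disconnected means not path-connected. *)

(* Defs.v *)
From HB Require Import structures.
From mathcomp Require Import all_boot all_order all_algebra all_fingroup all_solvable.
From mathcomp Require Import all_classical all_reals all_analysis.
From mathcomp Require Import Rstruct Rstruct_topology.
From Stdlib Require Import Rdefinitions.
Set Implicit Arguments. Unset Strict Implicit. Unset Printing Implicit Defensive.
Import Order.TTheory GRing.Theory Num.Theory.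
Local Open Scope classical_set_scope.
Local Open Scope ring_scope.

Definition subgroup_poset (gT : finGroupType) (G : {group gT}) : {set {group gT}} :=
  [set H : {group gT} | (H \proper G) && (H :!=: 1)%g].

(* Geometric realisation of the order complex of L(G): the points are the
   convex combinations of vertices of L(G) whose support is a chain, i.e.
   functions f : {group gT} -> R, f >= 0, sum f = 1, supported on a chain of
   L(G).  The topology is the subspace topology of the product topology
   R^{group gT}; for a finite complex this coincides with the usual
   (weak / Euclidean) topology of the realisation. *)
Definition order_complex_realization (gT : finGroupType) (G : {group gT})
  : set {ptws {group gT} -> R} :=
  [set f | (forall H, 0 <= f H)
        /\ (forall H, f H != 0 -> H \in subgroup_poset G)
        /\ \sum_(H : {group gT}) f H = 1
        /\ (forall H K, f H != 0 -> f K != 0 -> (H \subset K) || (K \subset H))].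

Definition path_connected_set (X : topologicalType) (A : set X) : Prop :=
  forall x y, A x -> A y ->
    exists f : R -> X,
      [/\ f 0 = x, f 1 = y,
          {within [set t : R | 0 <= t <= 1], continuous f}
        & forall t : R, 0 <= t <= 1 -> A (f t)].

Definition disconnected_space (X : topologicalType) (A : set X) : Prop :=
  ~ path_connected_set A.

(* Main.v *)
Set Warnings "-notation-overridden,-ambiguous-paths,-notation-incompatible-prefix,-deprecated".
Require Import Defs.
From HB Require Import structures.
From mathcomp Require Import all_boot all_order all_algebra all_fingroup all_solvable.
From mathcomp Require Import all_classical all_reals all_analysis.
From mathcomp Require Import Rstruct Rstruct_topology.
From Stdlib Require Import Rdefinitions.
From mathcomp Require Import lra.
Import Order.TTheory GRing.Theory Num.Theory.
Local Open Scope classical_set_scope.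
Local Open Scope ring_scope.

Lemma ptws_continuous (I : Type) (g : R -> {ptws I -> R}) :
  (forall i, continuous (fun t => g t i)) -> continuous g.
Proof.
move=> hg t.
apply/cvg_sup => i.
move=> U [?/= [[W oW <-]]] /= Wsfz /filterS; apply.
apply: (hg i). exact: open_nbhs_nbhs.
Qed.

Lemma affine_continuous (a b : R) : continuous (fun t : R => a * t + b).
Proof.
move=> t.
have h1 : (fun x : R => a * x) @ t --> a * t.
  exact: (cvgMl_tmp (g := id) (cvg_id)).
have h2 : (fun _ : R => b) @ t --> b by exact: cvg_cst.
have := @cvgD _ R^o _ _ _ _ _ _ _ h1 h2.
exact.
Qed.

Definition pc {X : topologicalType} (A : set X) (x y : X) : Prop :=
  exists f : R -> X, [/\ f 0 = x, f 1 = y, continuous f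
        & forall t : R, 0 <= t <= 1 -> A (f t)].

Lemma pc_refl {X : topologicalType} (A : set X) x : A x -> pc A x x.
Proof.
move=> Ax; exists (cst x); split => //; exact: cst_continuous.
Qed.

Lemma pc_sym {X : topologicalType} {A : set X} {x y} : pc A x y -> pc A y x.
Proof.
case=> f [f0 f1 cf fA]; exists (fun t => f (-1 * t + 1)); split.
- by rewrite mulr0 add0r.
- by rewrite mulr1 addNr.
- move=> t; apply: (@continuous_comp _ _ _ (fun t : R => -1 * t + 1) f).
    exact: affine_continuous.
  exact: cf.
- move=> t /andP[t0 t1]; apply: fA; apply/andP; split; lra.
Qed.

Lemma pc_trans {X : topologicalType} {A : set X} {x y z} :
  pc A x y -> pc A y z -> pc A x z.
Proof.
case=> f [f0 f1 cf fA]; case=> g [g0 g1 cg gA].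
pose h := fun t : R => if t <= 2^-1 then f (2 * t + 0) else g (2 * t + -1).
have hA : {in [set t : R | t <= 2^-1], h =1 (fun t => f (2 * t + 0))}.
  by move=> t; rewrite inE /h /= => ->.
have hB : {in [set t : R | 2^-1 <= t], h =1 (fun t => g (2 * t + -1))}.
  move=> t; rewrite inE /h /=; case: ifP => // t1 t2.
  have -> : t = 2^-1 by apply/eqP; rewrite eq_le t1 t2.
  by rewrite addr0 mulfV // f1 -g0; congr g; lra.
exists h; split.
- by rewrite /h ifT ?mulr0 ?addr0 //; lra.
- rewrite /h ifF; first by rewrite -g1; congr g; lra.
  by apply: negbTE; rewrite -ltNge; lra.
- apply/continuous_subspace_setT.
  have -> : [set: R] = [set t : R | t <= 2^-1] `|` [set t : R | 2^-1 <= t].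
    apply/seteqP; split => t _ //=; case: (lerP t 2^-1) => ht; [left|right] => //.
    exact: ltW.
  apply: withinU_continuous; [exact: closed_le | exact: closed_ge | |].
  + have K : {within [set t : R | t <= 2^-1], continuous (fun t => f (2 * t + 0))}.
      apply: continuous_subspaceT => t; apply: continuous_comp; last exact: cf.
      exact: affine_continuous.
    exact: (subspace_eq_continuous (fun t ht => esym (hA t ht)) K).
  + have K : {within [set t : R | 2^-1 <= t], continuous (fun t => g (2 * t + -1))}.
      apply: continuous_subspaceT => t; apply: continuous_comp; last exact: cg.
      exact: affine_continuous.
    exact: (subspace_eq_continuous (fun t ht => esym (hB t ht)) K).
- move=> t /andP[t0 t1]; rewrite /h; case: ifP => ht.
    by apply: fA; apply/andP; split; lra.
  move/negbT: ht; rewrite -ltNge => ht.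
  by apply: gA; apply/andP; split; lra.
Qed.

Definition delta {gT : finGroupType} (H : {group gT}) : {ptws {group gT} -> R} :=
  fun K => if K == H then 1 else 0.

Lemma seg (gT : finGroupType) (G : {group gT}) (f g : {ptws {group gT} -> R}) :
  order_complex_realization G f -> order_complex_realization G g ->
  (forall H K, (f H != 0) || (g H != 0) -> (f K != 0) || (g K != 0) ->
     (H \subset K) || (K \subset H)) ->
  pc (order_complex_realization G) f g.
Proof.
move=> [f0 [fs [f1 fc]]] [g0 [gs [g1 gc]]] hc.
have supp : forall (t : R) H, (1 - t) * f H + t * g H != 0 -> (f H != 0) || (g H != 0).
  move=> t H; apply: contraNT; rewrite negb_or => /andP[/negPn/eqP-> /negPn/eqP->].
  by rewrite !mulr0 addr0.
exists (fun t => (fun K => (1 - t) * f K + t * g K) : {ptws {group gT} -> R}); split.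
- by apply: functional_extensionality_dep => K /=; rewrite subr0 mul1r mul0r addr0.
- by apply: functional_extensionality_dep => K /=; rewrite subrr mul0r mul1r add0r.
- apply: ptws_continuous => K /=.
  have -> : (fun t : R => (1 - t) * f K + t * g K) = (fun t => (g K - f K) * t + f K).
    by apply: functional_extensionality_dep => t; lra.
  exact: affine_continuous.
- move=> t /andP[t0 t1]; split; [|split; [|split]].
  + move=> H; apply: addr_ge0; apply: mulr_ge0 => //; lra.
  + by move=> H /supp /orP[/fs|/gs].
  + rewrite big_split /= -!mulr_sumr f1 g1; lra.
  + by move=> H K /supp hH /supp hK; exact: hc.
Qed.

Lemma delta_in (gT : finGroupType) (G : {group gT}) (H : {group gT}) :
  H \in subgroup_poset G -> order_complex_realization G (delta H).
Proof.
move=> HP; rewrite /delta; split; [|split; [|split]].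
- by move=> K; case: ifP.
- by move=> K; case: ifP => [/eqP->|]; rewrite ?eqxx.
- by rewrite (bigD1 H) //= eqxx big1 ?addr0 // => K /negbTE ->.
- by move=> K L; case: ifP => [/eqP->|]; case: ifP => [/eqP->|]; rewrite ?eqxx ?subxx.
Qed.

Arguments delta_in {gT G H}.

Lemma delta_neq0 (gT : finGroupType) (H K : {group gT}) :
  (delta H K != 0) = (K == H).
Proof. by rewrite /delta; case: ifP; rewrite ?oner_eq0 ?eqxx. Qed.

Lemma pt_to_vertex (gT : finGroupType) (G : {group gT}) f :
  order_complex_realization G f ->
  exists2 H, H \in subgroup_poset G & pc (order_complex_realization G) f (delta H).
Proof.
move=> Xf; have [f0 [fs [f1 fc]]] := Xf.
have [H fH] : exists H, f H != 0.
  apply: contrapT => hn; move: f1; rewrite big1 => [/esym/eqP|K _].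
    by rewrite oner_eq0.
  by case: (eqVneq (f K) 0) => // h; exfalso; apply: hn; exists K.
have HP := fs H fH.
exists H => //; apply: seg => //; first exact: delta_in.
move=> K L; rewrite !delta_neq0.
by move=> /orP[hK|/eqP->] /orP[hL|/eqP->]; apply: fc.
Qed.

Lemma vertex_edge (gT : finGroupType) (G : {group gT}) (H K : {group gT}) :
  H \in subgroup_poset G -> K \in subgroup_poset G -> H \subset K ->
  pc (order_complex_realization G) (delta H) (delta K).
Proof.
move=> HP KP HK; apply: seg; try exact: delta_in.
move=> A B; rewrite !delta_neq0.
by move=> /orP[]/eqP-> /orP[]/eqP->; rewrite ?subxx ?HK ?orbT.
Qed.

Lemma pc_connected (gT : finGroupType) (G : {group gT}) (N : {group gT}) :
  N \in subgroup_poset G ->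
  (forall H, H \in subgroup_poset G -> pc (order_complex_realization G) (delta H) (delta N)) ->
  path_connected_set (order_complex_realization G).
Proof.
move=> NP hN x y Xx Xy.
have [H HP xH] := pt_to_vertex _ _ _ Xx.
have [K KP yK] := pt_to_vertex _ _ _ Xy.
have : pc (order_complex_realization G) x y.
  apply: pc_trans xH _; apply: pc_trans (hN H HP) _.
  apply: pc_trans (pc_sym (hN K KP)) _; exact: pc_sym.
case=> f [f0 f1 cf fA]; exists f; split => //.
exact: continuous_subspaceT.
Qed.

Lemma isolated_val (gT : finGroupType) (G P : {group gT}) f :
  (forall H, H \in subgroup_poset G -> (H \subset P) || (P \subset H) -> H = P) ->
  order_complex_realization G f -> f P != 0 -> f P = 1.
Proof.
move=> iso [f0 [fs [f1 fc]]] fP.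
move: f1; rewrite (bigD1 P) //= big1 ?addr0 // => K KP.
case: (eqVneq (f K) 0) => // fK; exfalso.
have := iso K (fs K fK) (fc K P fK fP).
by move=> e; move: KP; rewrite e eqxx.
Qed.

Arguments isolated_val {gT G P f}.

Lemma not_pc (gT : finGroupType) (G P Q : {group gT}) :
  P \in subgroup_poset G -> Q \in subgroup_poset G -> Q != P ->
  (forall H, H \in subgroup_poset G -> (H \subset P) || (P \subset H) -> H = P) ->
  ~ path_connected_set (order_complex_realization G).
Proof.
move=> PP QP QnP iso pcX.
have [f [f0 f1 cf fA]] := pcX _ _ (delta_in PP) (delta_in QP).
pose phi := fun t => f t P.
have cphi : {within `[0, 1], continuous phi}.
  have -> : [set` `[(0:R), 1]] = [set t : R | 0 <= t <= 1].
    by apply/seteqP; split => t /=; rewrite in_itv.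
  move=> t; have := @continuous_comp (subspace [set t : R | 0 <= t <= 1]) _ _ (from_subspace [set t : R | 0 <= t <= 1] f) (fun g => g P) t (cf t).
  by apply; have := @proj_continuous _ (fun _ => R) P (f t); exact.
have [] := @IVT R phi 0 1 (2^-1) ler01 cphi.
  rewrite /phi f0 f1 /delta eqxx eq_sym (negbTE QnP) /=.
  by rewrite minEle maxEle ler10 /=; apply/andP; split; lra.
move=> c; rewrite in_itv /= => c01 hc.
have fcP : f c P != 0 by rewrite -/(phi c) hc; apply/eqP; lra.
have := isolated_val iso (fA c c01) fcP.
by rewrite -/(phi c) hc; lra.
Qed.

Local Close Scope ring_scope.
Local Close Scope classical_set_scope.
Local Open Scope group_scope.

Lemma bad_complement (gT : finGroupType) (G N H : {group gT}) (conn : {group gT} -> Prop) :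
  minnormal N G -> N \proper G -> H \proper G -> H :!=: 1 -> conn N ->
  (forall A B : {group gT}, A \proper G -> A :!=: 1 -> B \proper G -> B :!=: 1 ->
     (A \subset B) || (B \subset A) -> conn B -> conn A) ->
  ~ conn H ->
  [/\ N ><| H = G, prime #|H|, N :!=: 1, (exists2 q, prime q & q.-abelem N)
    & forall K : {group gT}, K \subset N -> H \subset 'N(K) -> K :=: 1 \/ K :=: N].
Proof.
move=> minN prN prH ntH cN ce ncH.
have /andP[ntN nNG] := mingroupp minN.
have sNG := proper_sub prN; have sHG := proper_sub prH.
have nNH : H \subset 'N(N) := fintype.subset_trans sHG nNG.
have viaN : forall K : {group gT}, K \proper G -> K :!=: 1 -> N \subset K -> conn K.
  by move=> K prK ntK sNK; apply: (ce K N) => //; rewrite sNK orbT.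
have tiNH : N :&: H = 1.
  case: (eqVneq (N :&: H) 1) => // ntI; exfalso.
  have prI : (N :&: H)%G \proper G by apply: sub_proper_trans prN; exact: subsetIl.
  have cI : conn (N :&: H)%G by apply: (ce _ N) => //; rewrite subsetIl.
  by apply: ncH; apply: (ce H (N :&: H)%G) => //; rewrite subsetIr orbT.
have defJ : N <*> H = G.
  apply/eqP; rewrite eqEproper join_subG sNG sHG /=; apply/negP => prJ.
  have ntJ : (N <*> H)%G :!=: 1.
    by apply: contraNneq ntN => J1; apply/eqP/trivgP; rewrite -J1 joing_subl.
  apply: ncH; apply: (ce H (N <*> H)%G) => //; first by rewrite joing_subr.
  by apply: viaN => //; rewrite joing_subl.
have cardG : #|G| = muln #|N| #|H|.
  by rewrite -defJ norm_joinEr // TI_cardMg.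
have minH : forall K : {group gT}, K \subset H -> K :!=: 1 -> K :=: H.
  move=> K sKH ntK; case: (eqVneq K H) => [->//|neKH]; exfalso.
  have prKH : K \proper H by rewrite finset.properEneq neKH.
  have nNK : K \subset 'N(N) := fintype.subset_trans sKH nNH.
  have tiNK : N :&: K = 1.
    by apply/trivgP; rewrite -tiNH finset.setISS.
  have prJ : (N <*> K)%G \proper G.
    rewrite properEcard join_subG sNG (fintype.subset_trans sKH sHG) /=.
    by rewrite norm_joinEr // TI_cardMg // cardG ltn_pmul2l ?cardG_gt0 ?proper_card.
  have ntJ : (N <*> K)%G :!=: 1.
    by apply: contraNneq ntN => J1; apply/eqP/trivgP; rewrite -J1 joing_subl.
  have prK : K \proper G := sub_proper_trans sKH prH.
  have cK : conn K.
    apply: (ce K (N <*> K)%G) => //; first by rewrite joing_subr.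
    by apply: viaN => //; rewrite joing_subl.
  by apply: ncH; apply: (ce H K) => //; rewrite sKH orbT.
have maxH : forall M : {group gT}, H \subset M -> M \proper G -> M :=: H.
  move=> M sHM prM; case: (eqVneq M H) => [->//|neMH]; exfalso; apply: ncH.
  have ntM : M :!=: 1.
    by apply: contraNneq ntH => M1; apply/eqP/trivgP; rewrite -M1.
  have ntI : (N :&: M)%G :!=: 1.
    apply/negP => /eqP tiNM.
    have : #|N * M| <= #|G| by apply: subset_leq_card; rewrite mulG_subG sNG proper_sub.
    rewrite TI_cardMg // cardG leq_pmul2l ?cardG_gt0 // leqNgt.
    by rewrite proper_card // finset.properEneq eq_sym neMH.
  have prI : (N :&: M)%G \proper G by apply: sub_proper_trans prN; exact: subsetIl.
  have cI : conn (N :&: M)%G by apply: (ce _ N) => //; rewrite subsetIl.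
  have cM : conn M by apply: (ce M (N :&: M)%G) => //; rewrite subsetIr orbT.
  by apply: (ce H M) => //; rewrite sHM.
have prime_H : prime #|H|.
  case: (trivgVpdiv H) => [H1|[p p_pr pH]]; first by rewrite H1 eqxx in ntH.
  have [x Hx ox] := Cauchy p_pr pH.
  have ntx : <[x]>%G :!=: 1.
    by rewrite /= cycle_eq1 -order_gt1 ox prime_gt1.
  have sxH : <[x]> \subset H by rewrite cycle_subG.
  by rewrite -(minH _ sxH ntx) /= -orderE ox.
set p := #|H| in prime_H minH maxH cardG *.
have pH : p.-group H by rewrite /pgroup pnat_id.
have nsNG : normal N G by rewrite /normal sNG.
have solN : solvable N.
  have [S sylS sHS] := Sylow_superset sHG pH.
  case: (eqVneq S H) => [eSH | neSH]; last first.
    have eSG : S :=: G.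
      apply/eqP; rewrite eqEproper (pHall_sub sylS) /=; apply/negP => prS.
      by case/eqP: neSH; apply: val_inj; exact: maxH S sHS prS.
    apply: solvableS sNG _; rewrite -eSG; exact: pgroup_sol (pHall_pgroup sylS).
  have sylH : p.-Sylow(G) H by rewrite -eSH.
  have [q q_pr qN] : exists2 q, prime q & q %| #|N|.
    by case: (trivgVpdiv N) => [N1|//]; rewrite N1 eqxx in ntN.
  have [x Nx ox] := Cauchy q_pr qN.
  have sxN : <[x]> \subset N by rewrite cycle_subG.
  have qx : q.-group <[x]> by rewrite /pgroup -orderE ox pnat_id.
  have [Q sylQ sxQ] := Sylow_superset sxN qx.
  have sQN := pHall_sub sylQ.
  have ntQ : Q :!=: 1.
    apply: contraTneq (prime_gt1 q_pr) => Q1.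
    have : <[x]> \subset (1 : {set gT}) by rewrite -Q1.
    by move/subset_leq_card; rewrite cards1 -orderE ox leqNgt.
  have defG := Frattini_arg nsNG sylQ.
  case: (boolP (G \subset 'N(Q))) => [nQG | nnQG].
    have [_ minN'] := mingroupP minN.
    have eQN := minN' Q (introT andP (conj ntQ nQG)) sQN.
    by rewrite -eQN; exact: pgroup_sol (pHall_pgroup sylQ).
  exfalso.
  pose M := (G :&: 'N(Q))%G.
  have prM : M \proper G.
    rewrite properE subsetIl /=; apply: contra nnQG => sGM.
    exact: fintype.subset_trans sGM (subsetIr _ _).
  have pM : p %| #|M|.
    have := mul_cardG N M; rewrite defG cardG -mulnA => /eqP.
    rewrite eqn_pmul2l ?cardG_gt0 // => /eqP ->.
    by rewrite dvdn_mulr.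
  have [y My oy] := Cauchy prime_H pM.
  have syG : <[y]> \subset G by rewrite cycle_subG (fintype.subsetP (subsetIl G 'N(Q))).
  have py : p.-group <[y]> by rewrite /pgroup -orderE oy pnat_id.
  have [S' sylS' syS'] := Sylow_superset syG py.
  have [z Gz eS'] := Sylow_trans sylH sylS'.
  have eyS' : <[y]> :=: S'.
    apply/eqP; rewrite eqEcard syS' eS' cardJg -orderE oy.
    by rewrite leqnn.
  have sHzM : H :^ z \subset M by rewrite -eS' -eyS' cycle_subG.
  have Gz' : z^-1 \in G by rewrite groupV.
  have sHM' : H \subset (M :^ z^-1)%G by rewrite /= -sub_conjgV invgK.
  have prM' : (M :^ z^-1)%G \proper G.
    rewrite properEcard /= cardJg proper_card // andbT.
    exact: conj_subG Gz' (proper_sub prM).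
  have eM' := maxH _ sHM' prM'.
  have sQM : Q \subset M by rewrite finset.subsetI normG (fintype.subset_trans sQN sNG).
  have : Q :^ z^-1 \subset N :&: H.
    rewrite finset.subsetI -eM' conjSg sQM andbT.
    have nNz : z^-1 \in 'N(N) := fintype.subsetP nNG _ Gz'.
    by rewrite -(normP nNz) conjSg.
  rewrite tiNH => /trivgP /eqP; rewrite conjsg_eq1.
  by apply/negP.
have [_ _ abN] := minnormal_solvable minN (subxx N) solN.
have [q q_pr qabN] := is_abelemP abN.
have abelN := abelem_abelian qabN.
split => //.
- by rewrite sdprodE // -norm_joinEr // defJ.
- by exists q.
move=> K sKN nKH.
have nKG : G \subset 'N(K) by rewrite -defJ join_subG sub_abelian_norm.
case: (eqVneq (K : {set gT}) 1) => [->|ntK]; [by left | right].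
have [_ minN'] := mingroupP minN.
by apply: minN' => //; rewrite ntK.
Qed.

Lemma good_isolated (gT : finGroupType) (G A P : {group gT}) (p : nat) :
  A ><| P = G -> prime p -> #|P| = p -> A :!=: 1 ->
  (forall H : {group gT}, H \subset A -> P \subset 'N(H) -> H :=: 1 \/ H :=: A) ->
  [/\ P \proper G, P :!=: 1, A \proper G, A != P &
   forall H : {group gT}, H \proper G -> H :!=: 1 -> (H \subset P) || (P \subset H) -> H = P].
Proof.
move=> sd p_pr oP ntA irr.
have [_ defG nAP tiAP] := sdprodP sd.
have sAG : A \subset G by rewrite -defG mulG_subl.
have sPG : P \subset G by rewrite -defG mulG_subr.
have ntP : P :!=: 1.
  by rewrite trivg_card1 oP; apply: contraTneq (prime_gt1 p_pr) => ->.
have prP : P \proper G.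
  rewrite properE sPG /=; apply: contra ntA => sGP.
  by rewrite -subG1 -tiAP finset.subsetI subxx (fintype.subset_trans sAG sGP).
have prA : A \proper G.
  rewrite properE sAG /=; apply: contra ntP => sGA.
  by rewrite -subG1 -tiAP finset.subsetI subxx (fintype.subset_trans sPG sGA).
split => //.
  apply/eqP => eAP; move/negP: ntA; apply.
  by rewrite -subG1 -tiAP finset.subsetI subxx eAP /=.
move=> H prH ntH /orP[sHP|sPH].
  have oH : #|H| = p.
    apply/(prime_nt_dvdP p_pr); first by rewrite -trivg_card1.
    by rewrite -oP cardSg.
  by apply: val_inj => /=; apply/eqP; rewrite eqEcard sHP oP oH leqnn.
have sHG := proper_sub prH.
have nHAP : P \subset 'N(H :&: A) by rewrite normsI // normsG.
case: (irr (H :&: A)%G (subsetIr _ _) nHAP) => /= eI.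
  apply: val_inj => /=.
  by rewrite -{1}(finset.setIidPl sHG) -defG -group_modr // eI mul1g.
exfalso; move/negP: (proper_subn prH); apply.
by rewrite -defG mulG_subG sPH -eI subsetIl.
Qed.

Theorem mainTheorem19 (gT : finGroupType) (G : {group gT}) :
  G :!=: 1 -> ~~ simple G ->
  (disconnected_space (order_complex_realization G) <->
   exists (A P : {group gT}) (p : nat),
     [/\ A ><| P = G,
         prime p /\ #|P| = p,
         A :!=: 1,
         (exists2 q, prime q & q.-abelem A)
       & forall H : {group gT}, H \subset A -> P \subset 'N(H) ->
           H :=: 1 \/ H :=: A]).
Proof.
move=> ntG nsG; split.
- move=> dis; apply: contrapT => nform; apply: dis.
  have [M [/andP[sMG nMG] ntM neMG]] : exists M : {group gT}, [/\ normal M G, M :!=: 1 & M :!=: G].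
    apply: contrapT => hn; move/negP: nsG; apply; apply/simpleP; split => // H nsH.
    case: (eqVneq (H : {set gT}) 1) => [-> | ntH]; [by left | right].
    case: (eqVneq (H : {set gT}) G) => [-> // | neHG].
    by exfalso; apply: hn; exists H.
  have [N minN sNM] := minnormal_exists ntM nMG.
  have prN : N \proper G.
    by apply: sub_proper_trans sNM _; rewrite finset.properEneq neMG.
  have /andP[ntN _] := mingroupp minN.
  have NP : N \in subgroup_poset G by rewrite inE prN ntN.
  apply: (pc_connected _ _ _ NP) => H; rewrite inE => /andP[prH ntH].
  apply: contrapT => ncH.
  have ce : forall A B : {group gT}, A \proper G -> A :!=: 1 -> B \proper G -> B :!=: 1 ->
      (A \subset B) || (B \subset A) ->
      pc (order_complex_realization G) (delta B) (delta N) ->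
      pc (order_complex_realization G) (delta A) (delta N).
    move=> A B prA ntA prB ntB cmp cB.
    have AP : A \in subgroup_poset G by rewrite inE prA ntA.
    have BP : B \in subgroup_poset G by rewrite inE prB ntB.
    apply: pc_trans cB; case/orP: cmp => s.
      exact: vertex_edge.
    exact: pc_sym (vertex_edge _ _ _ _ BP AP s).
  have [sd prHH _ ab irr] := @bad_complement gT G N H
    (fun K => pc (order_complex_realization G) (delta K) (delta N))
    minN prN prH ntH (pc_refl _ _ (delta_in NP)) ce ncH.
  by apply: nform; exists N, H, #|H|; split.
- case=> A [P [p [sd [p_pr oP] ntA _ irr]]].
  have [prP ntP prA neAP iso] := good_isolated _ _ _ _ _ sd p_pr oP ntA irr.
  apply: (@not_pc gT G P A).
  + by rewrite inE prP ntP.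
  + by rewrite inE prA ntA.
  + exact: neAP.
  + by move=> H; rewrite inE => /andP[prH ntH]; exact: iso.
Qed.
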